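(* Let $d\in\mathbb{N}$ and let $\mathcal{M},\mathcal{G}\subseteq\mathbb{N}_0^d$ be non-empty games. Then $\mathcal{M}^\infty=\mathcal{G}^\infty$ if and only if $\min(\mathcal{M})=\min(\mathcal{G})$.
   Context: For $d\in\mathbb{N}$ a game is a set $\mathcal{M}\subseteq\mathbb{N}_0^d$ of moves. From position $\boldsymbol x$ a player may move to $\boldsymbol y\in\mathbb{N}_0^d$ iff $\boldsymbol x-\boldsymbol y\in\mathcal{M}$. Misère play: a player who cannot move wins. If $\boldsymbol 0\in\mathcal{M}$, $P(\mathcal{M})=\varnothing$. Otherwise: a position is an N-position if it has no option or some option is a P-position; otherwise it is a P-position; $P(\mathcal{M})$ denotes the set of P-positions. The $\star$-operator is $\mathcal{M}^\star=P(\mathcal{M})$; $\mathcal{M}^0=\mathcal{M}$, $\mathcal{M}^i=(\mathcal{M}^{i-1})^\star$. $\mathcal{M}^\infty=\lim_i\mathcal{M}^i$ is the pointwise limit (the set of $\boldsymbol x$ lying in $\mathcal{M}^i$ for all sufficiently large $i$, where every $\boldsymbol x$ is eventually always in or eventually always out); it always exists. $\min(S)$ is the set of minimal elements of $S$ under the componentwise partial order. *)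

(* Defs.v *)
From mathcomp Require Import all_boot.
Set Implicit Arguments. Unset Strict Implicit. Unset Printing Implicit Defensive.

Definition pt (d : nat) := {ffun 'I_d -> nat}.

Definition game (d : nat) := pt d -> Prop.

Definition zero_pt (d : nat) : pt d := [ffun _ => 0].

Definition ple d (x y : pt d) : bool := [forall i, x i <= y i].

(* componentwise (truncated) difference; used only when y <= x *)
Definition psub d (x y : pt d) : pt d := [ffun i => x i - y i].

Definition psum d (x : pt d) : nat := \sum_(i < d) x i.

Definition move d (M : game d) (x y : pt d) : Prop :=
  ple y x /\ M (psub x y).

(* When 0 \notin M every option of x has strictly smaller coordinate sum,
   so fuel = psum x suffices. *)
Fixpoint Pfuel d (M : game d) (k : nat) (x : pt d) : Prop :=
  match k with
  | 0 => False
  | k.+1 => (exists y, move M x y) /\ forall y, move M x y -> ~ Pfuel M k y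
  end.

Definition Ppos d (M : game d) : game d :=
  fun x => ~ M (zero_pt d) /\ Pfuel M (psum x) x.

Fixpoint star_iter d (M : game d) (i : nat) : game d :=
  match i with
  | 0 => M
  | i.+1 => Ppos (star_iter M i)
  end.

(* M^infty: pointwise limit = points eventually always in M^i *)
Definition star_inf d (M : game d) : game d :=
  fun x => exists N, forall i, N <= i -> star_iter M i x.

Definition min_elems d (S : game d) : game d :=
  fun x => S x /\ forall y, S y -> ple y x -> y = x.

(* Main.v *)
Require Import Defs.
From mathcomp Require Import all_boot.
From mathcomp Require Import zify.
From Stdlib Require Import Classical.
Set Implicit Arguments. Unset Strict Implicit. Unset Printing Implicit Defensive.

Section Aux.
Variable d : nat.
Implicit Types (x y z l m : pt d) (A B X : game d).

Lemma pleP x y : reflect (forall i, x i <= y i) (ple x y).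
Proof. exact: forallP. Qed.

Lemma ple_refl x : ple x x.
Proof. by apply/pleP. Qed.

Lemma ple_trans x y z : ple x y -> ple y z -> ple x z.
Proof. move=> /pleP h1 /pleP h2; apply/pleP => i; exact: leq_trans (h1 i) (h2 i). Qed.

Lemma ple_anti x y : ple x y -> ple y x -> x = y.
Proof.
move=> /pleP h1 /pleP h2; apply/ffunP => i; apply/eqP; rewrite eqn_leq h1 h2 //.
Qed.

Lemma ple0 x : ple (zero_pt d) x.
Proof. by apply/pleP => i; rewrite ffunE. Qed.

Lemma ple_zero y : ple y (zero_pt d) -> y = zero_pt d.
Proof. move=> h; apply: ple_anti h (ple0 _). Qed.

Lemma psub_ple x y : ple (psub x y) x.
Proof. by apply/pleP => i; rewrite ffunE leq_subr. Qed.

Lemma psub_psub x y : ple y x -> psub x (psub x y) = y.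
Proof.
move=> /pleP h; apply/ffunP => i; rewrite !ffunE.
by rewrite subKn //; exact: h.
Qed.

Lemma psub_x0 x : psub x (zero_pt d) = x.
Proof. by apply/ffunP => i; rewrite !ffunE subn0. Qed.

Lemma psub_xx x : psub x x = zero_pt d.
Proof. by apply/ffunP => i; rewrite !ffunE subnn. Qed.

Lemma psumD x y : ple y x -> psum x = psum y + psum (psub x y).
Proof.
move=> /pleP h; rewrite /psum -big_split /=; apply: eq_bigr => i _.
rewrite ffunE subnKC //.
Qed.

Lemma psum0 z : psum z = 0 -> z = zero_pt d.
Proof.
move/eqP; rewrite /psum sum_nat_eq0 => /forallP h; apply/ffunP => i.
rewrite ffunE; apply/eqP; exact: h i.
Qed.

Lemma psum_zero : psum (zero_pt d) = 0.
Proof. by rewrite /psum big1 // => i _; rewrite ffunE. Qed.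

Lemma psub_eq x y : ple y x -> psub x y = x -> y = zero_pt d.
Proof.
move=> /pleP h e; apply/ffunP => i; rewrite ffunE.
have := congr1 (fun f : pt d => f i) e; rewrite /= ffunE; have := h i; lia.
Qed.

Definition U A x := exists l, A l /\ ple l x.

Lemma agree_Pfuel A B n : (forall z, psum z <= n -> (A z <-> B z)) ->
  forall k x, psum x <= n -> (Pfuel A k x <-> Pfuel B k x).
Proof.
move=> hAB; elim=> [|k IH] x hx //=.
have hmv : forall y, move A x y <-> move B x y.
  move=> y; rewrite /move; split=> -[hy h]; split=> //; apply/hAB => //;
  move: (psumD hy); lia.
have hy : forall y, move A x y -> psum y <= n.
  by move=> y [hy _]; move: (psumD hy); lia.
split=> -[[y hy0] h]; split.
- by exists y; apply/hmv.
- move=> z hz; rewrite -IH; [apply: h; exact/hmv| apply: hy; exact/hmv].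
- by exists y; apply/hmv.
- move=> z hz; rewrite IH; [apply: h; exact/hmv| exact: hy].
Qed.

Lemma Pfuel_zero A k : ~ A (zero_pt d) -> ~ Pfuel A k (zero_pt d).
Proof.
move=> hA; case: k => [|k] /=; first by case.
move=> [[y [hy hA']] _].
move: hA'; rewrite (ple_zero hy) psub_xx; exact: hA.
Qed.

Lemma exmove_U A x : (exists y, move A x y) <-> U A x.
Proof.
split.
- by move=> [y [hy h]]; exists (psub x y); split=> //; exact: psub_ple.
- move=> [l [hl hlx]]; exists (psub x l); split; first exact: psub_ple.
  by rewrite psub_psub.
Qed.

Lemma half A B n x k : ~ A (zero_pt d) -> ~ B (zero_pt d) ->
  (forall z, psum z < n -> (A z <-> B z)) -> psum x = k.+1 -> psum x <= n ->
  (forall y, move A x y -> ~ Pfuel A k y) -> (forall y, move B x y -> ~ Pfuel B k y).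
Proof.
move=> nA nB hAB hk hx h y [hy hB].
case: (classic (y = zero_pt d)) => [->|hy0]; first exact: Pfuel_zero.
have hyx : y <> x by move=> e; apply: nB; rewrite -(psub_xx x) -{2}e.
have hs := psumD hy.
have hpy : psum y <> 0 by move=> /psum0.
have hpz : psum (psub x y) <> 0.
  by move=> /psum0 e; apply: hyx; apply: ple_anti hy _; apply/pleP => i;
  have := congr1 (fun f : pt d => f i) e; rewrite /= !ffunE; lia.
rewrite -(agree_Pfuel (n := psum y)) //.
- apply: h; split => //; apply/hAB => //; lia.
- move=> z hz; apply: hAB; lia.
Qed.

Lemma step A B n : ~ A (zero_pt d) -> ~ B (zero_pt d) ->
  (forall x, U A x <-> U B x) -> (forall z, psum z < n -> (A z <-> B z)) ->
  forall x, psum x <= n -> (Ppos A x <-> Ppos B x).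
Proof.
move=> nA nB hU hAB x hx; rewrite /Ppos.
case E: (psum x) => [|k] /=; first by split; case.
have hBA : forall z, psum z < n -> (B z <-> A z) by move=> z hz; rewrite hAB.
split=> -[_ [h1 h2]]; (split; [done|split]).
- by apply/exmove_U; apply/hU; apply/exmove_U.
- exact: (half nA nB hAB E hx h2).
- by apply/exmove_U; apply/hU; apply/exmove_U.
- exact: (half nB nA hBA E hx h2).
Qed.

Lemma min_exists A l : A l -> exists m, min_elems A m /\ ple m l.
Proof.
have: forall n l, psum l <= n -> A l -> exists m, min_elems A m /\ ple m l.
  elim=> [|n IH] l0 hl hA;
  (case: (classic (exists y, A y /\ ple y l0 /\ y <> l0)) => [[y [hy [hyl hne]]]|hno]).
  - exfalso; have hs := psumD hyl.
    have : psum (psub l0 y) <> 0.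
      move=> /psum0 e; apply: hne; apply: ple_anti hyl _; apply/pleP => i;
      have := congr1 (fun f : pt d => f i) e; rewrite /= !ffunE; lia.
    have : psum y <> 0.
      move=> /psum0 e; apply: hne.
      have h0 : l0 = zero_pt d by apply: psum0; lia.
      by rewrite e h0.
    lia.
  - exists l0; split; last exact: ple_refl; split=> // y hy hyl.
    by apply: NNPP => hne; apply: hno; exists y.
  - have hs := psumD hyl.
    have : psum (psub l0 y) <> 0.
      move=> /psum0 e; apply: hne; apply: ple_anti hyl _; apply/pleP => i;
      have := congr1 (fun f : pt d => f i) e; rewrite /= !ffunE; lia.
    move=> hnz; have [m [hm hmy]] := IH y ltac:(lia) hy.
    by exists m; split=> //; apply: ple_trans hmy hyl.
  - exists l0; split; last exact: ple_refl; split=> // y hy hyl.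
    by apply: NNPP => hne; apply: hno; exists y.
by move=> h hl; exact: h _ _ (leqnn _) hl.
Qed.

Lemma Ppos_U X x : Ppos X x -> U X x.
Proof.
rewrite /Ppos; case: (psum x) => [|k] /= [_ //] [hm _]; exact/exmove_U.
Qed.

Lemma min_Ppos A m : ~ A (zero_pt d) -> min_elems A m -> Ppos A m.
Proof.
move=> nA [hm hmin]; split=> //.
case E: (psum m) => [|k] /=.
  by move: hm; rewrite (psum0 E).
split.
- by exists (zero_pt d); split; [exact: ple0| rewrite psub_x0].
- move=> y [hy hA]; have e := hmin _ hA (psub_ple _ _).
  rewrite (psub_eq hy e); exact: Pfuel_zero.
Qed.

Lemma U_Ppos A x : ~ A (zero_pt d) -> (U (Ppos A) x <-> U A x).
Proof.
move=> nA; split.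
- move=> [p [hp hpx]]; have [l [hl hlp]] := Ppos_U hp.
  by exists l; split=> //; apply: ple_trans hlp hpx.
- move=> [l [hl hlx]]; have [m [hm hml]] := min_exists hl.
  exists m; split; first exact: min_Ppos.
  exact: ple_trans hml hlx.
Qed.

Lemma Ppos_zero X : ~ Ppos X (zero_pt d).
Proof. by rewrite /Ppos psum_zero => -[]. Qed.

Lemma iter_nz M i : ~ M (zero_pt d) -> ~ star_iter M i (zero_pt d).
Proof. case: i => [|i] //= _; exact: Ppos_zero. Qed.

Lemma iter_U M i x : ~ M (zero_pt d) -> (U (star_iter M i) x <-> U M x).
Proof.
move=> nM; elim: i x => [|i IH] x //=.
rewrite U_Ppos; [exact: IH| exact: iter_nz].
Qed.

Lemma iter_min M x : ~ M (zero_pt d) -> min_elems M x ->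
  forall i, min_elems (star_iter M i) x.
Proof.
move=> nM hx; elim=> [|i [hi hmin]] //=.
split; first by apply: min_Ppos => //; exact: iter_nz.
move=> y hy hyx; have [l [hl hly]] := Ppos_U hy.
have e := hmin _ hl (ple_trans hly hyx).
by apply: (ple_anti hyx); rewrite -e.
Qed.

Lemma min_ext A B x : (forall z, A z <-> B z) -> (min_elems A x <-> min_elems B x).
Proof.
move=> h; split=> -[hx hm]; split; first (by apply/h);
  [move=> y hy; apply: hm; exact/h | |]; try by apply/h.
by move=> y hy; apply: hm; exact/h.
Qed.

Lemma star_min M x : ~ M (zero_pt d) -> (min_elems M x <-> min_elems (star_inf M) x).
Proof.
move=> nM.
have hS : forall m, min_elems M m -> star_inf M m.
  by move=> m hm; exists 0 => i _; case: (iter_min nM hm i).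
have hU : forall y, star_inf M y -> U M y.
  move=> y [N h]; apply/(iter_U N) => //; apply: Ppos_U; exact: (h N.+1 (leqnSn N)).
split.
- move=> hx; split; first exact: hS.
  move=> y hy hyx; have [l [hl hly]] := hU _ hy.
  have e := proj2 hx _ hl (ple_trans hly hyx).
  by apply: (ple_anti hyx); rewrite -e.
- move=> [hx hmin]; have [l [hl hlx]] := hU _ hx.
  have [m [hm hml]] := min_exists hl.
  have e := hmin _ (hS _ hm) (ple_trans hml hlx).
  by rewrite -e.
Qed.

Lemma Ppos_empty X x : (forall z, ~ X z) -> ~ Ppos X x.
Proof.
move=> h; rewrite /Ppos; case: (psum x) => [|k] /= [_ //] [[y [_ hy]] _].
exact: h hy.
Qed.

Lemma star_empty M x : M (zero_pt d) -> ~ star_inf M x.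
Proof.
move=> hM.
have h : forall i z, ~ star_iter M i.+1 z.
  elim=> [|i IH] z /=; first by move=> [].
  exact: Ppos_empty.
move=> [N hN]; exact: h N x (hN N.+1 (leqnSn _)).
Qed.

Lemma min_zero A x : A (zero_pt d) -> (min_elems A x <-> x = zero_pt d).
Proof.
move=> h; split.
- move=> [_ hm]; apply/esym/hm => //; exact: ple0.
- by move=> ->; split=> // y _; exact: ple_zero.
Qed.

Lemma agree_iter M G : ~ M (zero_pt d) -> ~ G (zero_pt d) ->
  (forall x, U M x <-> U G x) ->
  forall n i, n <= i -> forall x, psum x < n -> (star_iter M i x <-> star_iter G i x).
Proof.
move=> nM nG hU; elim=> [|n IH] i hi x hx; first lia.
case: i hi => [|i] hi; first lia.
rewrite /=; apply: (step (n := n)); try exact: iter_nz.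
- move=> z; apply: (iff_trans (iter_U _ _ nM)); apply: (iff_trans (hU z)).
  apply: iff_sym; exact: iter_U.
- by move=> z hz; apply: IH.
- lia.
Qed.

End Aux.

Theorem theorem5 (d : nat) (M G : game d) :
  0 < d ->
  (exists x, M x) -> (exists x, G x) ->
  ((forall x, star_inf M x <-> star_inf G x) <->
   (forall x, min_elems M x <-> min_elems G x)).
Proof.
move=> _ [m0 hm0] [g0 hg0]; split.
- move=> hS x.
  case: (classic (M (zero_pt d))) => hM0; case: (classic (G (zero_pt d))) => hG0.
  + by rewrite (min_zero _ hM0) (min_zero _ hG0).
  + exfalso; have [g [hg _]] := min_exists hg0.
    apply: (star_empty (x := g) hM0); apply/hS.
    by exists 0 => i _; case: (iter_min hG0 hg i).
  + exfalso; have [m [hm _]] := min_exists hm0.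
    apply: (star_empty (x := m) hG0); apply/hS.
    by exists 0 => i _; case: (iter_min hM0 hm i).
  + rewrite (star_min _ hM0) (star_min _ hG0); exact: min_ext.
- move=> hmin x.
  have hU : forall x, U M x <-> U G x.
    move=> y; split=> -[l [hl hly]].
    + have [m [hm hml]] := min_exists hl; exists m; split.
      * by case: (proj1 (hmin m) hm).
      * exact: ple_trans hml hly.
    + have [m [hm hml]] := min_exists hl; exists m; split.
      * by case: (proj2 (hmin m) hm).
      * exact: ple_trans hml hly.
  case: (classic (M (zero_pt d))) => hM0.
  + have hG0 : G (zero_pt d).
      by case: (proj1 (hmin _) (proj2 (min_zero _ hM0) erefl)).
    by split=> hs; exfalso; [exact: (star_empty hM0 hs) | exact: (star_empty hG0 hs)].
  + have hG0 : ~ G (zero_pt d).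
      move=> hG0; apply: hM0.
      by case: (proj2 (hmin _) (proj2 (min_zero _ hG0) erefl)).
    split=> -[N h]; exists (maxn N (psum x).+1) => i hi.
    * apply/(agree_iter hM0 hG0 hU (n := (psum x).+1)); try lia.
      apply: h; lia.
    * apply/(agree_iter hM0 hG0 hU (n := (psum x).+1)); try lia.
      apply: h; lia.
Qed.
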